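(* Let $p$ be an odd prime and $\alpha>1$ an integer with $\gcd(p,\alpha)=1$, let $\gamma=\operatorname{ord}_p(\alpha)$, and let $\tau>0$ be the integer with $p^{\tau}\,\|\,\alpha^\gamma-1$. Then for every integer $k\geq 0$, $$\left\{c_{\tau, k}\big((\alpha^b)_p\big) \;\middle|\; 0\leq b < \gamma p^k \right\} = \Lambda_k .$$
   Context: $p^k\,\|\, n$ means $p^k\mid n$ and $p^{k+1}\nmid n$. For a nonnegative integer $m$, $(m)_p$ denotes its base-$p$ representation $m=\sum_{i\ge0}a_ip^i$ with $0\le a_i<p$, viewed as an infinite digit sequence $(a_i)_{i\ge0}$ (padded with zeros). For such a digit sequence $a=(a_i)$ and integers $\tau\ge1,k\ge0$, define $c_{\tau,k}(a)=\langle a_{\tau+k-1},\dots,a_{\tau+1},a_\tau,a_0\rangle$ (a tuple of length $k+1$: the digits in positions $\tau+k-1$ down to $\tau$, followed by the digit in position $0$). Let $\delta=\{\alpha^j \bmod p : j\in\mathbb{Z}\}$ be the set of residues in $\{0,\dots,p-1\}$ generated by $\alpha$ modulo $p$. $\Lambda_k$ is the set of tuples $\langle \sigma_k,\sigma_{k-1},\dots,\sigma_1,\sigma_0\rangle$ with $\sigma_0\in\delta$ and $0\le\sigma_i<p$ integers for $1\le i\le k$. *)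

(* Defs.v *)
From mathcomp Require Import all_boot.
Set Implicit Arguments. Unset Strict Implicit. Unset Printing Implicit Defensive.

Definition digit (p m i : nat) : nat := (m %/ p ^ i) %% p.

(* c_{tau,k}((m)_p) = <a_{tau+k-1}, ..., a_tau, a_0> as a list of length k+1. *)
Definition ctk (p tau k m : nat) : seq nat :=
  [seq digit p m (tau + (k - 1 - j)) | j <- iota 0 k] ++ [:: digit p m 0].

(* delta = { alpha^j mod p : j in Z } as residues in {0,...,p-1}.
   For j >= 0 : r = alpha^j mod p; for j = -j' < 0 : r is the residue
   with r * alpha^j' = 1 (mod p). *)
Definition in_delta (p alpha r : nat) : Prop :=
  r < p /\
  ((exists j : nat, r = alpha ^ j %% p) \/
   (exists j : nat, r * alpha ^ j = 1 %[mod p])).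

(* Lambda_k : tuples <s_k, ..., s_1, s_0> with s_0 in delta, 0 <= s_i < p. *)
Definition in_Lambda (p alpha k : nat) (s : seq nat) : Prop :=
  size s = k.+1 /\ all (fun x => x < p) s /\ in_delta p alpha (last 0 s).

(* Main.v *)
Require Import Defs.
From mathcomp Require Import all_boot.
From mathcomp Require Import zify ring.

Lemma modM_split y a b : 0 < a -> 0 < b ->
  y %% (a * b) = y %% a + a * ((y %/ a) %% b).
Proof.
move=> a0 b0.
have Hy : y = (y %/ a %/ b) * (a * b) + (a * ((y %/ a) %% b) + y %% a).
  rewrite {1}(divn_eq y a) {1}(divn_eq (y %/ a) b); ring.
have Hlt : a * ((y %/ a) %% b) + y %% a < a * b.
  have h1 := ltn_pmod (y %/ a) b0. have h2 := ltn_pmod y a0.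
  have : a * ((y %/ a) %% b) <= a * (b - 1) by rewrite leq_mul2l; apply/orP; right; lia.
  nia.
rewrite {1}Hy modnMDl modn_small //; lia.
Qed.

Lemma digitS p y i : digit p y i.+1 = digit p (y %/ p) i.
Proof. by rewrite /digit expnS divnMA. Qed.

Lemma digit0 p y : digit p y 0 = y %% p.
Proof. by rewrite /digit expn0 divn1. Qed.

Lemma digits_mod p k : 0 < p -> forall y y',
  (forall i, i < k -> digit p y i = digit p y' i) -> y %% p ^ k = y' %% p ^ k.
Proof.
move=> p0; elim: k => [|k IH] y y' H; first by rewrite expn0 !modn1.
rewrite expnS !modM_split ?expn_gt0 ?p0 //.
have h0 := H 0 isT. rewrite !digit0 in h0. rewrite h0.
rewrite (IH (y %/ p) (y' %/ p)) // => i lti.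
by rewrite -!digitS; apply: H.
Qed.

Lemma digit_shift p x t i : digit p x (t + i) = digit p (x %/ p ^ t) i.
Proof. by rewrite /digit expnD divnMA. Qed.

Lemma mod_from_digits p t k x y : 0 < p ->
  x %% p ^ t = y %% p ^ t ->
  (forall i, i < k -> digit p x (t + i) = digit p y (t + i)) ->
  x %% p ^ (t + k) = y %% p ^ (t + k).
Proof.
move=> p0 Ht H.
rewrite expnD !modM_split ?expn_gt0 ?p0 // Ht.
rewrite (@digits_mod p k p0 (x %/ p ^ t) (y %/ p ^ t)) // => i li.
by rewrite -!digit_shift; apply: H.
Qed.

Lemma mod_cancel q a x y : coprime q a -> a * x = a * y %[mod q] -> x = y %[mod q].
Proof.
move=> cq.
wlog le : x y / x <= y.
  move=> W H; case: (leqP x y) => h; first exact: W.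
  by apply/esym/W; [lia| apply/esym].
move=> /eqP; rewrite eq_sym eqn_mod_dvd ?leq_mul2l ?le ?orbT // -mulnBr Gauss_dvdr //.
by rewrite -eqn_mod_dvd // eq_sym => /eqP.
Qed.

Lemma mod_weaken d q x y : d %| q -> x = y %[mod q] -> x = y %[mod d].
Proof. by move=> dq H; rewrite -(modn_dvdm x dq) -(modn_dvdm y dq) H. Qed.

Lemma pow_mod1 x q m : x = 1 %[mod q] -> x ^ m = 1 %[mod q].
Proof. by move=> H; rewrite -modnXm H modnXm exp1n. Qed.

Lemma binom_exp y w : exists c, (1 + y) ^ w = 1 + w * y + 'C(w, 2) * y ^ 2 + y ^ 3 * c.
Proof.
elim: w => [|w [c IH]]; first by exists 0; rewrite expn0 bin0n /= !(muln0, mul0n, addn0).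
exists (c + 'C(w, 2) + y * c).
rewrite expnSr IH binS bin1 -addn1; ring.
Qed.

Definition Eq p t x := exists2 u, x = 1 + p ^ t * u & ~~ (p %| u).

Lemma EqA p t x : prime p -> odd p -> 0 < t -> Eq p t x -> Eq p t.+1 (x ^ p).
Proof.
move=> pp op; case: t => [//|t] _ [u -> nu].
have [c ->] := binom_exp (p ^ t.+1 * u) p.
set q := p./2.
have hp2 : p = (q.*2).+1 by rewrite /q -{1}(odd_double_half p) op.
have hC : 'C(p, 2) = p * q by rewrite bin2 {2}hp2 /= -doubleMr doubleK.
rewrite hC.
exists (u + p * (q * p ^ t * u ^ 2 + p ^ t * p ^ t * u ^ 3 * c)).
  rewrite !expnS; ring.
by rewrite dvdn_addl // dvdn_mulr.
Qed.

Lemma EqB p t x w : prime p -> 0 < t -> Eq p t x -> ~~ (p %| w) -> Eq p t (x ^ w).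
Proof.
move=> pp; case: t => [//|t] _ [u -> nu] nw.
have [c ->] := binom_exp (p ^ t.+1 * u) w.
exists (w * u + p * ('C(w, 2) * p ^ t * u ^ 2 + p * p ^ t * p ^ t * u ^ 3 * c)).
  rewrite !expnS; ring.
rewrite dvdn_addl; last by rewrite dvdn_mulr.
by rewrite Euclid_dvdM // negb_or nw.
Qed.

Lemma Eq_mod p t x : Eq p t x -> x = 1 %[mod p ^ t].
Proof. by case=> u -> _; rewrite addnC mulnC modnMDl. Qed.

Lemma Eq_nmod p t x : prime p -> Eq p t x -> x = 1 %[mod p ^ t.+1] -> False.
Proof.
move=> pp [u -> nu] /eqP.
rewrite eqn_mod_dvd ?leq_addr // addKn expnSr dvdn_pmul2l ?expn_gt0 ?prime_gt0 //.
by rewrite (negbTE nu).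
Qed.

Lemma EqJ p alpha gamma tau : 0 < alpha -> p ^ tau %| alpha ^ gamma - 1 ->
  ~~ (p ^ tau.+1 %| alpha ^ gamma - 1) -> Eq p tau (alpha ^ gamma).
Proof.
move=> a0 /dvdnP [u hu] nd; exists u.
  by rewrite mulnC -hu subnKC // expn_gt0 a0.
apply: contra nd; rewrite hu => /dvdnP [v ->].
by rewrite -mulnA -expnS dvdn_mull.
Qed.

Lemma EqP p alpha gamma tau : prime p -> odd p -> 0 < tau -> Eq p tau (alpha ^ gamma) ->
  forall j, Eq p (tau + j) (alpha ^ (gamma * p ^ j)).
Proof.
move=> pp op t0 EJ; elim=> [|j IH]; first by rewrite addn0 expn0 muln1.
rewrite expnSr mulnA expnM addnS; apply: EqA => //; lia.
Qed.

Lemma Lord p alpha gamma tau k d : prime p -> odd p -> 0 < tau -> Eq p tau (alpha ^ gamma) ->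
  0 < d -> alpha ^ (gamma * d) = 1 %[mod p ^ (tau + k)] -> p ^ k %| d.
Proof.
move=> pp op t0 EJ d0 H.
have [w cw hd] := pfactor_coprime pp d0.
move: H; rewrite hd; set j := logn p d => H.
case: (leqP k j) => hkj; first by apply: dvdn_mull; apply: dvdn_exp2l.
have E1 : Eq p (tau + j) ((alpha ^ (gamma * p ^ j)) ^ w).
  apply: EqB => //; first lia.
    exact: EqP.
  by rewrite -prime_coprime.
exfalso; move: (Eq_nmod _ _ _ pp E1); apply.
rewrite -expnM mulnC mulnA (mulnC w gamma) -mulnA.
apply: (mod_weaken _ _ _ _ _ H); apply: dvdn_exp2l; lia.
Qed.

Theorem theorem2p3 (p alpha gamma tau : nat)
  (hp : prime p) (hodd : odd p) (halpha : 1 < alpha) (hcop : coprime p alpha)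
  (hgpos : 0 < gamma) (hg : alpha ^ gamma = 1 %[mod p])
  (hgmin : forall n, 0 < n -> alpha ^ n = 1 %[mod p] -> gamma <= n)
  (htpos : 0 < tau) (htdvd : p ^ tau %| alpha ^ gamma - 1)
  (htndvd : ~~ (p ^ tau.+1 %| alpha ^ gamma - 1)) :
  forall k : nat, forall s : seq nat,
    (exists2 b, b < gamma * p ^ k & s = ctk p tau k (alpha ^ b)) <->
    in_Lambda p alpha k s.
Proof.
have p0 : 0 < p := prime_gt0 hp.
have a0 : 0 < alpha by lia.
have EJ := EqJ p alpha gamma tau a0 htdvd htndvd.
move=> k s; split.
  case=> b _ ->; rewrite /in_Lambda /ctk.
  split; first by rewrite size_cat size_map size_iota /= addn1.
  split.
    rewrite all_cat /= andbT ltn_pmod // andbT.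
    by apply/allP => x /mapP [y _ ->]; rewrite /digit ltn_pmod.
  rewrite last_cat /=; split; first by rewrite /digit ltn_pmod.
  by left; exists b; rewrite digit0.
case=> hs [hall hdel].
set s0 := last 0 s.
have [j hj] : exists j, s0 = alpha ^ j %% p.
  case: hdel => hlt [[j hj]|[j hj]]; first by exists j.
  exists (gamma * j.+1 - j).
  rewrite /s0 -(modn_small hlt).
  apply: (mod_cancel p (alpha ^ j)); first by rewrite coprimeXr.
  rewrite mulnC hj -expnD subnKC; last first.
    have h1 : j <= gamma * j by rewrite leq_pmull.
    have h2 : gamma * j <= gamma * j.+1 by rewrite leq_mul2l leqnSn orbT.
    exact: leq_trans h1 h2.
  by rewrite expnM; apply/esym/pow_mod1.
set r := j %% gamma.
have hr : r < gamma by rewrite ltn_pmod.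
have H0 : s0 = alpha ^ r %% p.
  rewrite hj {1}(divn_eq j gamma) expnD (mulnC (j %/ gamma)) expnM -modnMml (pow_mod1 _ _ _ hg).
  by rewrite modnMml mul1n.
have low : forall m, alpha ^ (r + gamma * m) = alpha ^ r %[mod p ^ tau].
  move=> m; rewrite expnD expnM -modnMmr (pow_mod1 _ _ _ (Eq_mod _ _ _ EJ)).
  by rewrite modnMmr muln1.
have lowp : forall m, alpha ^ (r + gamma * m) = alpha ^ r %[mod p].
  move=> m; apply: (mod_weaken _ _ _ _ _ (low m)).
  by rewrite -{1}(expn1 p) dvdn_exp2l.
have key : forall a b : nat, a <= b -> b < p ^ k ->
    alpha ^ (r + gamma * a) = alpha ^ (r + gamma * b) %[mod p ^ (tau + k)] -> a = b.
  move=> a b ab bk H.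
  have E : alpha ^ (r + gamma * b) = alpha ^ (r + gamma * a) * alpha ^ (gamma * (b - a)).
    by rewrite -expnD; congr (_ ^ _); rewrite mulnBr -addnA subnKC // leq_mul2l ab orbT.
  move: H; rewrite E -{1}(muln1 (alpha ^ (r + gamma * a))) => H.
  have H1 := mod_cancel _ _ _ _ (coprimeXr _ (coprimeXl _ hcop)) H.
  case: (posnP (b - a)) => hba; first by apply/eqP; rewrite eqn_leq ab -subn_eq0 hba.
  have := Lord p alpha gamma tau k (b - a) hp hodd htpos EJ hba (esym H1).
  move/(dvdn_leq hba) => h; clear -h bk ab; lia.
pose f := fun m : 'I_(p ^ k) => [ffun i : 'I_k =>
  Ordinal (ltn_pmod (alpha ^ (r + gamma * m) %/ p ^ (tau + i)) p0)].
have finj : injective f.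
  move=> m1 m2 /ffunP H.
  have Hd : forall n1 n2 : 'I_(p ^ k), (forall i : 'I_k, f n1 i = f n2 i) ->
      alpha ^ (r + gamma * n1) = alpha ^ (r + gamma * n2) %[mod p ^ (tau + k)].
    move=> n1 n2 Hn; apply: mod_from_digits => //; first by rewrite !low.
    move=> i li; have := Hn (Ordinal li); rewrite !ffunE.
    by move/(congr1 val).
  apply: val_inj; case: (leqP m1 m2) => h.
    exact: (key m1 m2 h (ltn_ord m2) (Hd m1 m2 H)).
  apply/esym; apply: (key m2 m1 (ltnW h) (ltn_ord m1)); apply: Hd => i; by rewrite H.
have hnth : forall i, nth 0 s i < p.
  move=> i; case: (ltnP i (size s)) => hi.
    by move/all_nthP: hall; apply.
  by rewrite nth_default.
pose g := [ffun i : 'I_k => Ordinal (hnth (k - 1 - i))].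
have : g \in codom f by apply: inj_card_onto; rewrite // card_ffun !card_ord.
case/codomP => m hm.
exists (r + gamma * m).
  have h1 : gamma * m.+1 <= gamma * p ^ k by rewrite leq_mul2l ltn_ord orbT.
  apply: leq_trans h1; rewrite mulnS -addSn leq_add2r //.
apply: (@eq_from_nth _ 0).
  by rewrite hs /ctk size_cat size_map size_iota /= addn1.
move=> i; rewrite hs ltnS leq_eqVlt => /orP [/eqP -> | ik].
  have -> : nth 0 s k = s0 by rewrite /s0 -nth_last hs.
  rewrite /ctk nth_cat size_map size_iota ltnn subnn /= digit0.
  by rewrite H0 lowp.
rewrite /ctk nth_cat size_map size_iota ik (nth_map 0) ?size_iota // nth_iota // add0n.
have hki : k - 1 - i < k by clear -ik; lia.
have := congr1 (fun F : {ffun 'I_k -> 'I_p} => val (F (Ordinal hki))) hm.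
rewrite /= !ffunE /=.
have -> : k - 1 - (k - 1 - i) = i by clear -ik; lia.
by [].
Qed.
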